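(* For any $m,n\geq 2$, the weight-$1$ summand $\mathcal{W}_1$ of $\check{\pi}_n(\mathbb{E}_m)$ is contained in $\operatorname{im}(\Psi_n)$ and is a direct summand of $\operatorname{im}(\Psi_n)$.
   Context: $\mathbb{E}_m$ is the shrinking wedge of countably many $m$-spheres $S^m_1,S^m_2,\dots$ (one-point union with wedgepoint $b_0$; $U$ open iff $U\cap S^m_j$ open for all $j$ and, if $b_0\in U$, $S^m_j\subseteq U$ for all but finitely many $j$). $X_{\leq k}=\bigvee_{j=1}^kS^m_j$, $b_{k+1,k}$ collapses the $(k+1)$-st sphere, $b_k:\mathbb{E}_m\to X_{\leq k}$ collapses $\bigcup_{j>k}S^m_j$; $\check{\pi}_n(\mathbb{E}_m)=\varprojlim_k(\pi_n(X_{\leq k}),(b_{k+1,k})_\#)$ and $\Psi_n([f])=([b_k\circ f])_k$. Let $a_i\in\pi_m(X_{\leq k})$ be the class of the inclusion of the $i$-th sphere. Fix coherent Hall sets $H_1\subseteq H_2\subseteq\cdots$ on $A_k=\{a_1,\dots,a_k\}$ (standard Hall-set construction: $H_k(1)=A_k$ ordered $a_1<\dots<a_k$; $H_k(p)$ consists of brackets $[x,y]$ with $x\in H_k(i)$, $y\in H_k(j)$, $i+j=p$, $x<y$, and $u\leq x$ if $y=[u,v]$, placed after lower weights; $H_{k+1}\setminus H_k$ are the words involving $a_{k+1}$), $H_\infty=\bigcup_kH_k$, and $H_\infty(j)$ the Hall words of weight (length) $j$. A Hall word $w$ of weight $L(w)$ is an iterated Whitehead product in $\pi_{(m-1)L(w)+1}(X_{\leq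 k})$, and $w\circ f$ denotes composition with $f\in\pi_n(S^{(m-1)L(w)+1})$. The isomorphism $\phi_{n,\infty}:\prod_{w\in H_\infty}\pi_n(S^{(m-1)L(w)+1})\to\check{\pi}_n(\mathbb{E}_m)$ is $(f_w)\mapsto(\sum_{w\in H_k}w\circ f_w)_k$, and the weight-$j$ summand is $\mathcal{W}_j=\phi_{n,\infty}\big(\prod_{w\in H_\infty(j)}\pi_n(S^{(m-1)j+1})\big)$. Thus $\mathcal{W}_1$ consists of the elements $(\sum_{i=1}^k(\iota_i)_\#\alpha_i)_k$ with $\alpha_i\in\pi_n(S^m)$, $\iota_i$ the inclusion of the $i$-th sphere. *)

(* Defs.v *)
From HB Require Import structures.
From mathcomp Require Import all_boot all_order all_algebra.
From mathcomp Require Import all_classical all_reals all_analysis.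
Import numFieldNormedType.Exports.
Import Order.TTheory GRing.Theory Num.Theory.

Set Implicit Arguments.
Unset Strict Implicit.
Unset Printing Implicit Defensive.

Local Open Scope classical_set_scope.
Local Open Scope ring_scope.

(* a predicate singling out its open sets.  Domains of maps are subsets of   *)
(* R^N = 'rV[R]_N with the (standard) subspace topology.                     *)

Record space (T : Type) := Space { carrier : set T; isopen : set T -> Prop }.

Section Framework.
Variable R : realType.

(* A is relatively open in D  (only A `&` D matters) *)
Definition relopen (N : nat) (D A : set 'rV[R]_N) : Prop :=
  exists V : set 'rV[R]_N, open V /\ V `&` D = A `&` D.

Definition cont_on (N : nat) (T : Type) (D : set 'rV[R]_N) (X : space T)
    (f : 'rV[R]_N -> T) : Prop :=
  (forall t, D t -> carrier X (f t)) /\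
  (forall U, isopen X U -> relopen D (f @^-1` U)).

Definition cube (N : nat) : set 'rV[R]_N :=
  [set t | forall i, 0 <= t 0 i <= 1].
Definition bdry (N : nat) : set 'rV[R]_N :=
  [set t | cube t /\ exists i, t 0 i = 0 \/ t 0 i = 1].

(* based maps (I^n, dI^n) -> (X, x0): representatives of pi_n(X, x0) *)
Definition based_map (n : nat) (T : Type) (X : space T) (x0 : T)
    (f : 'rV[R]_n -> T) : Prop :=
  cont_on (@cube n) X f /\ (forall t, bdry t -> f t = x0).

(* homotopy rel boundary: equality in pi_n(X, x0) *)
Definition homotopic (n : nat) (T : Type) (X : space T) (x0 : T)
    (f g : 'rV[R]_n -> T) : Prop :=
  exists H : 'rV[R]_(n + 1) -> T,
    cont_on (@cube (n + 1)) X H /\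
    (forall t, cube t ->
       H (row_mx t (const_mx 0)) = f t /\ H (row_mx t (const_mx 1)) = g t) /\
    (forall t s, bdry t -> 0 <= s <= 1 -> H (row_mx t (const_mx s)) = x0).

Definition first_le_half (n : nat) (t : 'rV[R]_n) : bool :=
  [forall i : 'I_n, (val i == 0%N) ==> (t 0 i <= 2^-1)].
Definition reparam (n : nat) (a b : R) (t : 'rV[R]_n) : 'rV[R]_n :=
  \row_i (if val i == 0%N then a * t 0 i + b else t 0 i).
Definition concat (n : nat) (T : Type) (f g : 'rV[R]_n -> T) : 'rV[R]_n -> T :=
  fun t => if first_le_half t then f (reparam 2 0 t) else g (reparam 2 (-1) t).
Definition rev (n : nat) (T : Type) (f : 'rV[R]_n -> T) : 'rV[R]_n -> T :=
  fun t => f (reparam (-1) 1 t).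

Definition sphere (m : nat) : set 'rV[R]_(m.+1) :=
  [set x | \sum_(i < m.+1) x 0 i ^+ 2 = 1].
Arguments sphere : clear implicits.
Definition s0 (m : nat) : 'rV[R]_(m.+1) := \row_i (if i == ord0 then 1 else 0).
Definition Sspace (m : nat) : space 'rV[R]_(m.+1) :=
  Space (sphere m) (relopen (sphere m)).

(* Wedges of m-spheres.  A point is None (the wedge point b0) or Some (j,x) *)
(* with j >= 1 the index of the sphere and x in S^m \ {s0}.                 *)
Definition wpt (m : nat) := option (nat * 'rV[R]_(m.+1)).

Definition inW (m j : nat) (x : 'rV[R]_(m.+1)) : wpt m :=
  if x == s0 m then None else Some (j, x).

Definition in_sphere_j (m : nat) (P : nat -> Prop) (p : wpt m) : Prop :=
  match p with
  | None => True
  | Some (j, x) => P j /\ sphere m x /\ x != s0 m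
  end.

Definition Xle (m k : nat) : space (wpt m) :=
  Space (in_sphere_j (fun j => (0 < j <= k)%N))
        (fun U => forall j, (0 < j <= k)%N ->
                    relopen (sphere m) [set x | U (inW j x)]).

Definition Espace (m : nat) : space (wpt m) :=
  Space (in_sphere_j (fun j => (0 < j)%N))
        (fun U => (forall j, (0 < j)%N -> relopen (sphere m) [set x | U (inW j x)])
               /\ (U None -> exists N, forall j, (N <= j)%N -> (0 < j)%N ->
                                        forall x, sphere m x -> U (inW j x))).

Definition collapse (m k : nat) (p : wpt m) : wpt m :=
  match p with
  | Some (j, x) => if (j <= k)%N then p else None
  | None => None
  end.

(* The Cech group  check-pi_n(E_m) = lim_k pi_n(X_{<=k}), via threads of    *)
(* representatives F k : I^n -> X_{<=k}.                                      *)
Definition thread (m n : nat) := nat -> 'rV[R]_n -> wpt m.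

Definition is_thread (m n : nat) (F : thread m n) : Prop :=
  (forall k, based_map (Xle m k) None (F k)) /\
  (forall k, homotopic (Xle m k) None (collapse k \o F k.+1) (F k)).

(* equality in the inverse limit *)
Definition cech_eq (m n : nat) (F G : thread m n) : Prop :=
  forall k, homotopic (Xle m k) None (F k) (G k).

Definition cech_add (m n : nat) (F G : thread m n) : thread m n :=
  fun k => concat (F k) (G k).
Definition cech_opp (m n : nat) (F : thread m n) : thread m n :=
  fun k => rev (F k).
Definition cech_zero (m n : nat) : thread m n := fun _ _ => None.

(* im(Psi_n):  Psi_n([f]) = ([b_k o f])_k *)
Definition in_imPsi (m n : nat) (F : thread m n) : Prop :=
  is_thread F /\
  exists f : 'rV[R]_n -> wpt m, based_map (Espace m) None f /\
    forall k, homotopic (Xle m k) None (F k) (collapse k \o f).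

Definition wsum (m n : nat) (alpha : nat -> 'rV[R]_n -> 'rV[R]_(m.+1)) (k : nat)
    : 'rV[R]_n -> wpt m :=
  foldr (fun i acc => concat (inW i \o alpha i) acc) (fun _ => None) (iota 1 k).

Definition in_W1 (m n : nat) (F : thread m n) : Prop :=
  is_thread F /\
  exists alpha : nat -> 'rV[R]_n -> 'rV[R]_(m.+1),
    (forall i, (0 < i)%N -> based_map (Sspace m) (s0 m) (alpha i)) /\
    forall k, homotopic (Xle m k) None (F k) (wsum alpha k).

Definition direct_summand_in (m n : nat) (A B : thread m n -> Prop) : Prop :=
  exists C : thread m n -> Prop,
    (forall F G, C F -> is_thread G -> cech_eq F G -> C G) /\
    C (@cech_zero m n) /\
    (forall F G, C F -> C G -> C (cech_add F G)) /\
    (forall F, C F -> C (cech_opp F)) /\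
    (forall F, C F -> B F) /\
    (forall F, B F -> exists W D, A W /\ C D /\ cech_eq F (cech_add W D)) /\
    (forall F, A F -> C F -> cech_eq F (@cech_zero m n)).

End Framework.

(* Main.v *)
Require Import Defs.
From HB Require Import structures.
From mathcomp Require Import all_boot all_order all_algebra.
From mathcomp Require Import all_classical all_reals all_analysis.
From mathcomp Require Import lra zify.
Import numFieldNormedType.Exports.
Import Order.TTheory GRing.Theory Num.Theory.
Set Implicit Arguments.
Unset Strict Implicit.
Unset Printing Implicit Defensive.
Local Open Scope classical_set_scope.
Local Open Scope ring_scope.

Section Top.
Variable R : realType.

Lemma mx_cont (T : topologicalType) (m n : nat) (g : T -> 'M[R]_(m, n)) :
  (forall i j, continuous (fun x => g x i j)) -> continuous g.
Proof.
move=> hg x A /nbhs_ballP [e e0 eA].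
have : \forall y \near x, forall ij : 'I_m * 'I_n, ball (g x ij.1 ij.2) e (g y ij.1 ij.2).
  apply: filter_forall => -[i j] /=.
  have := hg i j x; move=> /(_ (ball (g x i j) e)); apply.
  exact: nbhsx_ballx.
apply: filterS => y hy; apply: eA; split => // i j; exact: (hy (i, j)).
Qed.

Lemma relopen_local N (D A : set 'rV[R]_N) :
  (forall x, D x -> A x -> exists V, open V /\ V x /\ (forall y, V y -> D y -> A y)) ->
  relopen D A.
Proof.
move=> h.
exists (\bigcup_(W in [set W | open W /\ (forall y, W y -> D y -> A y)]) W).
split.
  by apply: bigcup_open => W [].
apply/seteqP; split => y [Hy Dy]; split => //.
  by case: Hy => W [_ hW] Wy; exact: hW.
have [V [oV [Vy hV]]] := h y Dy Hy.
by exists V.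
Qed.

Lemma relopen_elim N (D A : set 'rV[R]_N) x :
  relopen D A -> D x -> A x -> exists V, open V /\ V x /\ (forall y, V y -> D y -> A y).
Proof.
move=> [V [oV hV]] Dx Ax; exists V; split => //; split.
  by have : (A `&` D) x by []; rewrite -hV => -[].
move=> y Vy Dy; have : (V `&` D) y by []; by rewrite hV => -[].
Qed.

Lemma cont_comp M N (D' : set 'rV[R]_M) (D : set 'rV[R]_N) T (X : Defs.space T)
  (g : 'rV[R]_M -> 'rV[R]_N) (f : 'rV[R]_N -> T) :
  continuous g -> (forall t, D' t -> D (g t)) -> cont_on D X f ->
  cont_on D' X (f \o g).
Proof.
move=> cg hD [hc ho]; split => [t /hD /hc //|U /ho [V [oV hV]]].
exists (g @^-1` V); split; first by move/continuousP: cg; apply.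
apply/seteqP; split => y [Hy Dy]; split => //.
  have H1 : (V `&` D) (g y) by split => //; apply: hD.
  by move: H1; rewrite hV => -[].
have H1 : (f @^-1` U `&` D) (g y) by split => //; apply: hD.
by move: H1; rewrite -hV => -[].
Qed.

Lemma cont_ext N (D : set 'rV[R]_N) T (X : Defs.space T) (f g : 'rV[R]_N -> T) :
  (forall t, D t -> f t = g t) -> cont_on D X f -> cont_on D X g.
Proof.
move=> e [hc ho]; split => [t Dt|U /ho [V [oV hV]]]; first by rewrite -e //; apply: hc.
exists V; split => //; rewrite hV; apply/seteqP; split => y [Hy Dy]; split => //=.
  by rewrite -e.
by rewrite e.
Qed.

Lemma cont_paste N (D K1 K2 : set 'rV[R]_N) T (X : Defs.space T) (f : 'rV[R]_N -> T) :
  closed K1 -> closed K2 -> (forall t, D t -> K1 t \/ K2 t) ->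
  cont_on (D `&` K1) X f -> cont_on (D `&` K2) X f -> cont_on D X f.
Proof.
move=> c1 c2 hK [hc1 ho1] [hc2 ho2]; split.
  by move=> t Dt; case: (hK t Dt) => h; [apply: hc1|apply: hc2].
move=> U oU; apply: relopen_local => x Dx Ux.
have [W1 [oW1 [W1x hW1]]] : exists W1, open W1 /\ W1 x /\
    (forall y, W1 y -> D y -> K1 y -> (f @^-1` U) y).
  have [xK|xK] := pselect (K1 x).
    have [V [oV [Vx hV]]] := relopen_elim (ho1 U oU) (conj Dx xK) Ux.
    by exists V; split => //; split => // y Vy Dy Ky; apply: hV.
  exists (~` K1); split; first exact: closed_openC.
  by split => // y.
have [W2 [oW2 [W2x hW2]]] : exists W2, open W2 /\ W2 x /\
    (forall y, W2 y -> D y -> K2 y -> (f @^-1` U) y).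
  have [xK|xK] := pselect (K2 x).
    have [V [oV [Vx hV]]] := relopen_elim (ho2 U oU) (conj Dx xK) Ux.
    by exists V; split => //; split => // y Vy Dy Ky; apply: hV.
  exists (~` K2); split; first exact: closed_openC.
  by split => // y.
exists (W1 `&` W2); split; first exact: openI.
split => // y [y1 y2] Dy.
by case: (hK y Dy) => h; [apply: hW1|apply: hW2].
Qed.

Lemma cont_half N (D : set 'rV[R]_N) T (X : Defs.space T) (P : 'rV[R]_N -> R)
  (A B : 'rV[R]_N -> T) :
  continuous P ->
  cont_on (D `&` [set v | P v <= 2^-1]) X A ->
  cont_on (D `&` [set v | 2^-1 <= P v]) X B ->
  (forall v, D v -> P v = 2^-1 -> A v = B v) ->
  cont_on D X (fun v => if P v <= 2^-1 then A v else B v).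
Proof.
move=> cP hA hB hAB.
apply: (@cont_paste _ D (P @^-1` [set x | x <= 2^-1]) (P @^-1` [set x | 2^-1 <= x])).
- by apply: preimage_closed => //; exact: closed_le.
- by apply: preimage_closed => //; exact: closed_ge.
- by move=> t _; case: (lerP (P t) 2^-1) => h; [left|right; apply: ltW].
- by apply: cont_ext hA => t [Dt /= ->].
- apply: cont_ext hB => t [Dt /= ht]; case: ifP => // h.
  by symmetry; apply: hAB => //; apply/eqP; rewrite eq_le h ht.
Qed.

Definition spmap T T' (X : Defs.space T) (Y : Defs.space T') (phi : T -> T') :=
  (forall x, carrier X x -> carrier Y (phi x)) /\
  (forall U, isopen Y U -> isopen X (phi @^-1` U)).

Lemma cont_spmap N (D : set 'rV[R]_N) T T' (X : Defs.space T) (Y : Defs.space T') phi f :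
  spmap X Y phi -> cont_on D X f -> cont_on D Y (phi \o f).
Proof.
move=> [h1 h2] [c1 c2]; split => [t /c1 /h1 //|U /h2 /c2 //].
Qed.
End Top.

Section Geo.
Variable R : realType.

Lemma cont_coord (T : topologicalType) m n (G : T -> 'M[R]_(m, n)) i j :
  continuous G -> continuous (fun v => G v i j).
Proof. by move=> cG x; apply: continuous_comp (cG x) (@coord_continuous R m n i j (G x)). Qed.

Lemma cont_add (T : topologicalType) (f g : T -> R) :
  continuous f -> continuous g -> continuous (fun x => f x + g x).
Proof. move=> cf cg x; have := (@continuousD R R^o T f g x (cf x) (cg x)); exact. Qed.

Lemma cont_mul (T : topologicalType) (f g : T -> R) :
  continuous f -> continuous g -> continuous (fun x => f x * g x).
Proof. move=> cf cg x; exact: (@continuousM R R^o T f g x (cf x) (cg x)) || exact: (continuousM (cf x) (cg x)). Qed.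

Lemma cont_opp (T : topologicalType) (f : T -> R) :
  continuous f -> continuous (fun x => - f x).
Proof. move=> cf x; have := (@continuousN R R^o T f x (cf x)); exact. Qed.

Lemma cont_cst (T : topologicalType) (c : R) : continuous (fun _ : T => c).
Proof. by move=> x; apply: cst_continuous. Qed.

Lemma cont_min (T : topologicalType) (f g : T -> R) :
  continuous f -> continuous g -> continuous (fun x => Num.min (f x) (g x)).
Proof. move=> cf cg x; have := (@continuous_min R T f g x (cf x) (cg x)); exact. Qed.

Lemma cont_max (T : topologicalType) (f g : T -> R) :
  continuous f -> continuous g -> continuous (fun x => Num.max (f x) (g x)).
Proof. move=> cf cg x; have := (@continuous_max R T f g x (cf x) (cg x)); exact. Qed.

Lemma cont_row_mx (T : topologicalType) m n1 n2 (A : T -> 'M[R]_(m, n1)) (B : T -> 'M[R]_(m, n2)) :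
  continuous A -> continuous B -> continuous (fun x => row_mx (A x) (B x)).
Proof.
move=> cA cB; apply: mx_cont => i j.
under eq_fun => v do rewrite mxE.
by case: (fintype.split j) => k; apply: cont_coord.
Qed.

Lemma cont_const_mx (T : topologicalType) m n (S : T -> R) :
  continuous S -> continuous (fun x => (const_mx (S x) : 'M[R]_(m, n))).
Proof. by move=> cS; apply: mx_cont => i j; under eq_fun => v do rewrite mxE. Qed.

Lemma cont_id (T : topologicalType) : continuous (fun x : T => x).
Proof. by move=> x; apply: cvg_id. Qed.
End Geo.

Section Cube.
Variable R : realType.
Variable n : nat.

Definition rep (u : R) (t : 'rV[R]_n.+1) : 'rV[R]_n.+1 :=
  \row_i (if i == ord0 then u else t 0 i).
Definition pt (t : 'rV[R]_n.+1) (s : R) : 'rV[R]_(n.+1 + 1) := row_mx t (const_mx s).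
Definition sof (v : 'rV[R]_(n.+1 + 1)) : R := v 0 (rshift n.+1 ord0).
Implicit Types (u s a b : R) (t : 'rV[R]_n.+1) (v : 'rV[R]_(n.+1 + 1)).

Lemma rep0 u t : rep u t 0 ord0 = u.
Proof. by rewrite mxE eqxx. Qed.
Lemma repi u t i : i != ord0 -> rep u t 0 i = t 0 i.
Proof. by rewrite mxE => /negbTE ->. Qed.
Lemma rep_id t : rep (t 0 ord0) t = t.
Proof. by apply/rowP => i; rewrite mxE; case: eqP => // ->. Qed.
Lemma rep_rep u u' t : rep u (rep u' t) = rep u t.
Proof. by apply/rowP => i; rewrite !mxE; case: eqP. Qed.
Lemma rep0_rep u t : rep u t 0 ord0 = u. Proof. exact: rep0. Qed.

Lemma reparamE a b t : reparam a b t = rep (a * t 0 ord0 + b) t.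
Proof.
apply/rowP => i; rewrite !mxE.
have -> : (val i == 0%N) = (i == ord0) by [].
by case: eqP => // ->.
Qed.

Lemma fhE t : first_le_half t = (t 0 ord0 <= 2^-1).
Proof.
apply/forallP/idP => [h|h i].
  by have /implyP := h ord0; apply.
by apply/implyP => hi; have -> : i = ord0 by apply/val_inj/eqP.
Qed.

Lemma cube_rep t u : cube t -> 0 <= u <= 1 -> cube (rep u t).
Proof.
move=> ht hu i; rewrite mxE; case: eqP => _ //; exact: ht.
Qed.

Lemma bdry_rep01 t u : cube t -> u = 0 \/ u = 1 -> bdry (rep u t).
Proof.
move=> ht hu; split.
  by apply: cube_rep => //; case: hu => ->; rewrite ?lexx ?ler01.
by exists ord0; rewrite rep0.
Qed.

Lemma bdry_rep t u : bdry t -> 0 <= u <= 1 ->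
  ((t 0 ord0 = 0 \/ t 0 ord0 = 1) -> u = 0 \/ u = 1) -> bdry (rep u t).
Proof.
move=> [ht [i hi]] hu h; split; first exact: cube_rep.
have [ei|ne] := eqVneq i ord0.
  by exists ord0; rewrite rep0; apply: h; rewrite -ei.
by exists i; rewrite repi.
Qed.

Lemma lsub_pt t s : lsubmx (pt t s) = t.
Proof. exact: row_mxKl. Qed.
Lemma sof_pt t s : sof (pt t s) = s.
Proof. by rewrite /sof /pt row_mxEr mxE. Qed.
Lemma pt_sof v : pt (lsubmx v) (sof v) = v.
Proof.
rewrite /pt -{3}(hsubmxK v); congr row_mx.
by apply/rowP => j; rewrite !mxE /sof (ord1 j).
Qed.

Lemma cube_pt t s : cube t -> 0 <= s <= 1 -> cube (pt t s).
Proof.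
move=> ht hs i; rewrite /pt mxE; case: (fintype.split i) => k; first exact: ht.
by rewrite mxE.
Qed.
Lemma cube_lsub v : cube v -> cube (lsubmx v).
Proof. by move=> hv i; rewrite mxE; apply: hv. Qed.
Lemma cube_sof v : cube v -> 0 <= sof v <= 1.
Proof. by move=> hv; apply: hv. Qed.

Lemma cont_rep (T : topologicalType) (U : T -> R) (G : T -> 'rV[R]_n.+1) :
  continuous U -> continuous G -> continuous (fun x => rep (U x) (G x)).
Proof.
move=> cU cG; apply: mx_cont => i j.
under eq_fun => v do rewrite mxE.
by case: eqP => _; [|apply: cont_coord].
Qed.

Lemma cont_pt (T : topologicalType) (G : T -> 'rV[R]_n.+1) (S : T -> R) :
  continuous G -> continuous S -> continuous (fun x => pt (G x) (S x)).
Proof. by move=> cG cS; apply: cont_row_mx => //; apply: cont_const_mx. Qed.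

Lemma cont_sof : continuous sof.
Proof. exact: coord_continuous. Qed.
Lemma cont_lsub : continuous (lsubmx : 'rV[R]_(n.+1 + 1) -> 'rV[R]_n.+1).
Proof. exact: continuous_lsubmx. Qed.
Lemma cont_c0 : continuous (fun v : 'rV[R]_n.+1 => v 0 ord0).
Proof. exact: coord_continuous. Qed.

End Cube.

Section Hom.
Variable R : realType.
Variable n : nat.
Implicit Types (u s a b : R) (t : 'rV[R]_n.+1) (v : 'rV[R]_(n.+1 + 1)).

Definition hmt T (X : Defs.space T) (x0 : T) (f g : 'rV[R]_n.+1 -> T) :=
  exists H : 'rV[R]_(n.+1 + 1) -> T,
    cont_on (@cube R (n.+1 + 1)) X H /\
    (forall t, cube t -> H (pt t 0) = f t /\ H (pt t 1) = g t) /\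
    (forall t s, bdry t -> 0 <= s <= 1 -> H (pt t s) = x0).

Lemma homE T (X : Defs.space T) x0 f g : homotopic X x0 f g <-> hmt X x0 f g.
Proof. by []. Qed.

Lemma bdry_cube t : bdry t -> cube t.
Proof. by case. Qed.

Lemma s01 : (0 <= (0:R)) && ((0:R) <= 1). Proof. by rewrite lexx ler01. Qed.
Lemma s11 : (0 <= (1:R)) && ((1:R) <= 1). Proof. by rewrite lexx ler01. Qed.

Lemma concatE T (f g : 'rV[R]_n.+1 -> T) t :
  concat f g t = if t 0 ord0 <= 2^-1 then f (rep (2 * t 0 ord0) t)
                 else g (rep (2 * t 0 ord0 - 1) t).
Proof. by rewrite /concat fhE !reparamE addr0. Qed.

Lemma revE T (f : 'rV[R]_n.+1 -> T) t : Defs.rev f t = f (rep (1 - t 0 ord0) t).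
Proof. by rewrite /Defs.rev reparamE mulN1r addrC. Qed.

Variables (T : Type) (X : Defs.space T) (x0 : T).
Implicit Types (f g h : 'rV[R]_n.+1 -> T).

Lemma hbased_l f g : hmt X x0 f g -> based_map X x0 f.
Proof.
case=> H [cH [he hb]]; split.
  apply: (@cont_ext _ _ _ _ _ (H \o (fun t => pt t 0))).
    by move=> t ht /=; rewrite (he t ht).1.
  apply: cont_comp cH => //; first by apply: cont_pt; [exact: cont_id|exact: cont_cst].
  by move=> t ht; apply: cube_pt => //; exact: s01.
move=> t ht; rewrite -(he t (bdry_cube ht)).1; exact: hb ht s01.
Qed.

Lemma hbased_r f g : hmt X x0 f g -> based_map X x0 g.
Proof.
case=> H [cH [he hb]]; split.
  apply: (@cont_ext _ _ _ _ _ (H \o (fun t => pt t 1))).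
    by move=> t ht /=; rewrite (he t ht).2.
  apply: cont_comp cH => //; first by apply: cont_pt; [exact: cont_id|exact: cont_cst].
  by move=> t ht; apply: cube_pt => //; exact: s11.
move=> t ht; rewrite -(he t (bdry_cube ht)).2; exact: hb ht s11.
Qed.

Lemma hrefl f : based_map X x0 f -> hmt X x0 f f.
Proof.
case=> cf bf; exists (f \o lsubmx); split.
  apply: cont_comp cf. exact: (@cont_lsub R n). 
  exact: cube_lsub.
split; first by move=> t _ /=; rewrite !lsub_pt.
by move=> t s ht _ /=; rewrite lsub_pt; apply: bf.
Qed.

Lemma hsym f g : hmt X x0 f g -> hmt X x0 g f.
Proof.
case=> H [cH [he hb]].
exists (H \o (fun v => pt (lsubmx v) (1 - sof v))); split.
  apply: cont_comp cH.
    apply: cont_pt; first exact: (@cont_lsub R n).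
    by apply: cont_add; [exact: cont_cst|apply: cont_opp; exact: (@cont_sof R n)].
  move=> v hv; apply: cube_pt; first exact: cube_lsub.
  by have /andP[h1 h2] := cube_sof hv; apply/andP; split; lra.
split.
  by move=> t ht /=; rewrite !lsub_pt !sof_pt subr0 subrr (he t ht).2 (he t ht).1.
move=> t s ht /andP[s0 s1] /=; rewrite lsub_pt sof_pt; apply: hb => //.
by apply/andP; split; lra.
Qed.

Lemma hext f g f' g' : (forall t, cube t -> f t = f' t) -> (forall t, cube t -> g t = g' t) ->
  hmt X x0 f g -> hmt X x0 f' g'.
Proof.
move=> ef eg [H [cH [he hb]]]; exists H; split => //; split => // t ht.
by rewrite -ef // -eg //; apply: he.
Qed.

Lemma htrans f g h : hmt X x0 f g -> hmt X x0 g h -> hmt X x0 f h.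
Proof.
case=> H1 [c1 [e1 b1]] [H2 [c2 [e2 b2]]].
exists (fun v => if sof v <= 2^-1 then H1 (pt (lsubmx v) (2 * sof v))
                 else H2 (pt (lsubmx v) (2 * sof v - 1))); split.
  apply: cont_half; first exact: (@cont_sof R n).
  - apply: (cont_comp (f := H1) (g := fun v => pt (lsubmx v) (2 * sof v))) c1.
      apply: cont_pt; first exact: (@cont_lsub R n).
      by apply: cont_mul; [exact: cont_cst|exact: (@cont_sof R n)].
    move=> v [hv /= hh]; apply: cube_pt; first exact: cube_lsub.
    by have /andP[h1 h2] := cube_sof hv; apply/andP; split; lra.
  - apply: (cont_comp (f := H2) (g := fun v => pt (lsubmx v) (2 * sof v - 1))) c2.
      apply: cont_pt; first exact: (@cont_lsub R n).
      apply: cont_add; last exact: cont_cst.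
      by apply: cont_mul; [exact: cont_cst|exact: (@cont_sof R n)].
    move=> v [hv /= hh]; apply: cube_pt; first exact: cube_lsub.
    by have /andP[h1 h2] := cube_sof hv; apply/andP; split; lra.
  - move=> v hv ->.
    have -> : 2 * 2^-1 = 1 :> R by lra.
    rewrite subrr (e1 _ (cube_lsub hv)).2 (e2 _ (cube_lsub hv)).1 //.
split.
  move=> t ht; rewrite !sof_pt !lsub_pt.
  have -> : (0 : R) <= 2^-1 by lra.
  have -> : ((1 : R) <= 2^-1) = false by apply/negbTE; rewrite -ltNge; lra.
  have -> : (2 : R) * 1 - 1 = 1 by lra.
  by rewrite mulr0 (e1 t ht).1 (e2 t ht).2.
move=> t s ht /andP[s0 s1]; rewrite !sof_pt !lsub_pt.
case: ifP => hs.
  by apply: b1 => //; apply/andP; split; lra.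
by apply: b2 => //; move/negbT: hs; rewrite -ltNge => hs; apply/andP; split; lra.
Qed.


Lemma cube_rep_l t : cube t -> t 0 ord0 <= 2^-1 -> cube (rep (2 * t 0 ord0) t).
Proof.
move=> ht h; apply: cube_rep => //; have /andP[h1 h2] := ht ord0.
by apply/andP; split; lra.
Qed.
Lemma cube_rep_r t : cube t -> 2^-1 <= t 0 ord0 -> cube (rep (2 * t 0 ord0 - 1) t).
Proof.
move=> ht h; apply: cube_rep => //; have /andP[h1 h2] := ht ord0.
by apply/andP; split; lra.
Qed.
Lemma cube_rep_1 t : cube t -> cube (rep (1 - t 0 ord0) t).
Proof.
move=> ht; apply: cube_rep => //; have /andP[h1 h2] := ht ord0.
by apply/andP; split; lra.
Qed.
Lemma bdry_rep_l t : bdry t -> t 0 ord0 <= 2^-1 -> bdry (rep (2 * t 0 ord0) t).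
Proof.
move=> ht h; apply: bdry_rep => //; have /andP[h1 h2] := (bdry_cube ht) ord0.
  by apply/andP; split; lra.
by case=> e; rewrite e in h *; [left; rewrite mulr0|lra].
Qed.
Lemma bdry_rep_r t : bdry t -> ~~ (t 0 ord0 <= 2^-1) -> bdry (rep (2 * t 0 ord0 - 1) t).
Proof.
rewrite -ltNge => ht h; apply: bdry_rep => //; have /andP[h1 h2] := (bdry_cube ht) ord0.
  by apply/andP; split; lra.
by case=> e; rewrite e in h *; [lra|right; lra].
Qed.
Lemma bdry_rep_1 t : bdry t -> bdry (rep (1 - t 0 ord0) t).
Proof.
move=> ht; apply: bdry_rep => //; have /andP[h1 h2] := (bdry_cube ht) ord0.
  by apply/andP; split; lra.
by case=> ->; [right; lra|left; lra].
Qed.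

Lemma cont_P : continuous (fun v : 'rV[R]_(n.+1 + 1) => lsubmx v 0 ord0).
Proof. by apply: cont_coord; exact: (@cont_lsub R n). Qed.

Lemma based_concat f g : based_map X x0 f -> based_map X x0 g ->
  based_map X x0 (concat f g).
Proof.
move=> [cf bf] [cg bg]; split.
  apply: (@cont_ext _ _ _ _ _ (fun t => if t 0 ord0 <= 2^-1 then f (rep (2 * t 0 ord0) t)
                 else g (rep (2 * t 0 ord0 - 1) t))); first by move=> t _; rewrite concatE.
  apply: cont_half; first exact: (@cont_c0 R n).
  - apply: (cont_comp (f := f) (g := fun t => rep (2 * t 0 ord0) t)) cf.
      apply: cont_rep; last exact: cont_id.
      by apply: cont_mul; [exact: cont_cst|exact: (@cont_c0 R n)].
    by move=> t [ht /= h]; apply: cube_rep_l.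
  - apply: (cont_comp (f := g) (g := fun t => rep (2 * t 0 ord0 - 1) t)) cg.
      apply: cont_rep; last exact: cont_id.
      apply: cont_add; last exact: cont_cst.
      by apply: cont_mul; [exact: cont_cst|exact: (@cont_c0 R n)].
    by move=> t [ht /= h]; apply: cube_rep_r.
  - move=> t ht ->; have -> : 2 * 2^-1 = 1 :> R by lra.
    rewrite subrr bf ?bg //; apply: bdry_rep01 => //; by [left|right].
move=> t ht; rewrite concatE; case: ifPn => h.
  by apply: bf; apply: bdry_rep_l.
by apply: bg; apply: bdry_rep_r.
Qed.

Lemma based_rev f : based_map X x0 f -> based_map X x0 (Defs.rev f).
Proof.
move=> [cf bf]; split.
  apply: (@cont_ext _ _ _ _ _ (fun t => f (rep (1 - t 0 ord0) t))); first by move=> t _; rewrite revE.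
  apply: (cont_comp (f := f) (g := fun t => rep (1 - t 0 ord0) t)) cf.
    apply: cont_rep; last exact: cont_id.
    by apply: cont_add; [exact: cont_cst|apply: cont_opp; exact: (@cont_c0 R n)].
  by move=> t ht; apply: cube_rep_1.
by move=> t ht; rewrite revE; apply: bf; apply: bdry_rep_1.
Qed.

Lemma hconcat f g f' g' : hmt X x0 f f' -> hmt X x0 g g' ->
  hmt X x0 (concat f g) (concat f' g').
Proof.
case=> H1 [c1 [e1 b1]] [H2 [c2 [e2 b2]]].
exists (fun v => if lsubmx v 0 ord0 <= 2^-1
   then H1 (pt (rep (2 * lsubmx v 0 ord0) (lsubmx v)) (sof v))
   else H2 (pt (rep (2 * lsubmx v 0 ord0 - 1) (lsubmx v)) (sof v))); split.
  apply: cont_half; first exact: cont_P.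
  - apply: (cont_comp (f := H1) (g := fun v => pt (rep (2 * lsubmx v 0 ord0) (lsubmx v)) (sof v))) c1.
      apply: cont_pt; last exact: (@cont_sof R n).
      apply: cont_rep; last exact: (@cont_lsub R n).
      by apply: cont_mul; [exact: cont_cst|exact: cont_P].
    move=> v [hv /= hh]; apply: cube_pt; last exact: cube_sof.
    by apply: cube_rep_l => //; apply: cube_lsub.
  - apply: (cont_comp (f := H2) (g := fun v => pt (rep (2 * lsubmx v 0 ord0 - 1) (lsubmx v)) (sof v))) c2.
      apply: cont_pt; last exact: (@cont_sof R n).
      apply: cont_rep; last exact: (@cont_lsub R n).
      apply: cont_add; last exact: cont_cst.
      by apply: cont_mul; [exact: cont_cst|exact: cont_P].
    move=> v [hv /= hh]; apply: cube_pt; last exact: cube_sof.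
    by apply: cube_rep_r => //; apply: cube_lsub.
  - move=> v hv ->; have -> : 2 * 2^-1 = 1 :> R by lra.
    rewrite subrr b1 ?b2 //; try exact: cube_sof.
      by apply: bdry_rep01; [apply: cube_lsub|left].
    by apply: bdry_rep01; [apply: cube_lsub|right].
split.
  move=> t ht; rewrite !concatE !lsub_pt !sof_pt; case: ifPn => h.
    by rewrite (e1 _ (cube_rep_l ht h)).1 (e1 _ (cube_rep_l ht h)).2.
  have h' : 2^-1 <= t 0 ord0 by rewrite ltW // ltNge.
  by rewrite (e2 _ (cube_rep_r ht h')).1 (e2 _ (cube_rep_r ht h')).2.
move=> t s ht hs; rewrite lsub_pt sof_pt; case: ifPn => h.
  by apply: b1 => //; apply: bdry_rep_l.
by apply: b2 => //; apply: bdry_rep_r.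
Qed.

Lemma hrev f g : hmt X x0 f g -> hmt X x0 (Defs.rev f) (Defs.rev g).
Proof.
case=> H1 [c1 [e1 b1]].
exists (fun v => H1 (pt (rep (1 - lsubmx v 0 ord0) (lsubmx v)) (sof v))); split.
  apply: (cont_comp (f := H1) (g := fun v => pt (rep (1 - lsubmx v 0 ord0) (lsubmx v)) (sof v))) c1.
    apply: cont_pt; last exact: (@cont_sof R n).
    apply: cont_rep; last exact: (@cont_lsub R n).
    by apply: cont_add; [exact: cont_cst|apply: cont_opp; exact: cont_P].
  move=> v hv; apply: cube_pt; last exact: cube_sof.
  by apply: cube_rep_1 => //; apply: cube_lsub.
split.
  move=> t ht; rewrite !revE !lsub_pt !sof_pt.
  by rewrite (e1 _ (cube_rep_1 ht)).1 (e1 _ (cube_rep_1 ht)).2.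
by move=> t s ht hs; rewrite lsub_pt sof_pt; apply: b1 => //; apply: bdry_rep_1.
Qed.

Lemma hreparam (phi : R -> R -> R) f :
  continuous (fun v : 'rV[R]_(n.+1 + 1) => phi (lsubmx v 0 ord0) (sof v)) ->
  (forall u s, 0 <= u <= 1 -> 0 <= s <= 1 -> 0 <= phi u s <= 1) ->
  (forall s, 0 <= s <= 1 -> (phi 0 s = 0 \/ phi 0 s = 1) /\ (phi 1 s = 0 \/ phi 1 s = 1)) ->
  based_map X x0 f ->
  hmt X x0 (fun t => f (rep (phi (t 0 ord0) 0) t)) (fun t => f (rep (phi (t 0 ord0) 1) t)).
Proof.
move=> cphi hrange hends [cf bf].
exists (fun v => f (rep (phi (lsubmx v 0 ord0) (sof v)) (lsubmx v))); split.
  apply: (cont_comp (f := f) (g := fun v => rep (phi (lsubmx v 0 ord0) (sof v)) (lsubmx v))) cf.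
    by apply: cont_rep => //; exact: (@cont_lsub R n).
  move=> v hv; apply: cube_rep; first exact: cube_lsub.
  by apply: hrange; [apply: (cube_lsub hv)|apply: cube_sof].
split; first by move=> t ht; rewrite !lsub_pt !sof_pt.
move=> t s ht hs; rewrite lsub_pt sof_pt; apply: bf; apply: bdry_rep => //.
  by apply: hrange => //; apply: (bdry_cube ht).
by case=> ->; have [] := hends s hs.
Qed.

Lemma based_const : carrier X x0 -> based_map X x0 (fun _ : 'rV[R]_n.+1 => x0).
Proof.
move=> hx; split => // ; split => // U oU.
have [hU|hU] := pselect (U x0).
  by exists setT; split; [exact: openT|apply/seteqP; split => y []].
exists set0; split; [exact: open0|apply/seteqP; split => y [] //].
Qed.

End Hom.

Section HomComp.
Variable R : realType.
Variable n : nat.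
Variables (T T' : Type) (X : Defs.space T) (Y : Defs.space T') (x0 : T) (y0 : T').

Lemma based_comp phi (f : 'rV[R]_n.+1 -> T) : spmap X Y phi -> phi x0 = y0 ->
  based_map X x0 f -> based_map Y y0 (phi \o f).
Proof.
move=> sp e [cf bf]; split; first exact: cont_spmap cf.
by move=> t ht /=; rewrite bf.
Qed.

Lemma hcomp phi (f g : 'rV[R]_n.+1 -> T) : spmap X Y phi -> phi x0 = y0 ->
  hmt X x0 f g -> hmt Y y0 (phi \o f) (phi \o g).
Proof.
move=> sp e [H [cH [he hb]]]; exists (phi \o H); split; first exact: cont_spmap cH.
split; first by move=> t ht /=; rewrite !(he t ht).1 !(he t ht).2.
by move=> t s ht hs /=; rewrite hb.
Qed.
End HomComp.

Section Laws.
Variable R : realType.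
Variable n : nat.
Variables (T : Type) (X : Defs.space T) (x0 : T).
Implicit Types (f g h : 'rV[R]_n.+1 -> T) (t : 'rV[R]_n.+1).

Lemma minR (a b : R) : (a <= b /\ Num.min a b = a) \/ (b <= a /\ Num.min a b = b).
Proof.
rewrite /Order.min; case: (ltrP a b) => h; [left|right]; split => //; exact: ltW. Qed.
Lemma maxR (a b : R) : (a <= b /\ Num.max a b = b) \/ (b <= a /\ Num.max a b = a).
Proof.
rewrite /Order.max; case: (ltrP a b) => h; [left|right]; split => //; exact: ltW. Qed.

Lemma bdry_map f : based_map X x0 f -> forall t, bdry t -> f t = x0.
Proof. by case. Qed.

Ltac contac := repeat first [apply: cont_add | apply: cont_mul | apply: cont_opp
   | apply: cont_max | apply: cont_min | exact: cont_cst | exact: (@cont_P R n)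
   | exact: (@cont_sof R n)].

Lemma rep_eq u u' t : u = u' -> rep u t = rep u' t.
Proof. by move=> ->. Qed.

Lemma c01 t : cube t -> 0 <= t 0 ord0 <= 1.
Proof. by move=> ht; apply: ht. Qed.

Lemma lunit f : based_map X x0 f -> hmt X x0 (concat (fun _ => x0) f) f.
Proof.
move=> bf.
have := @hreparam R n T X x0 (fun u s => (1 - s) * Num.max 0 (2 * u - 1) + s * u) f.
case.
- by contac.
- move=> u s /andP[u0 u1] /andP[s0 s1].
  case: (maxR 0 (2 * u - 1)) => -[hm ->]; apply/andP; split; nra.
- move=> s hs; rewrite !mulr0 !mulr1 addr0 !add0r.
  case: (maxR 0 (-1)) => -[hm ->]; case: (maxR 0 (2 - 1)) => -[hm2 ->];
    (split; [left|right]); lra.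
- exact: bf.
move=> H [cH [he hb]]; apply: (@hext R n T X x0 _ _ _ _ _ _ (ex_intro _ H (conj cH (conj he hb)))).
  move=> t ht /=; rewrite concatE subr0 mul1r mul0r addr0.
  have /andP[t0 t1] := c01 ht.
  case: ifPn => hh.
    case: (maxR 0 (2 * t 0 ord0 - 1)) => -[hm ->].
      have -> : 2 * t 0 ord0 - 1 = 0 by lra.
      by apply: (bdry_map bf); apply: bdry_rep01 => //; left.
    by apply: (bdry_map bf); apply: bdry_rep01 => //; left.
  rewrite -ltNge in hh.
  by case: (maxR 0 (2 * t 0 ord0 - 1)) => -[hm ->] //; exfalso; lra.
by move=> t ht /=; rewrite subrr mul0r add0r mul1r rep_id.
Qed.

Lemma hrep_ext (phi : R -> R -> R) f F G :
  continuous (fun v : 'rV[R]_(n.+1 + 1) => phi (lsubmx v 0 ord0) (sof v)) ->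
  (forall u s, 0 <= u <= 1 -> 0 <= s <= 1 -> 0 <= phi u s <= 1) ->
  (forall s, 0 <= s <= 1 -> (phi 0 s = 0 \/ phi 0 s = 1) /\ (phi 1 s = 0 \/ phi 1 s = 1)) ->
  based_map X x0 f ->
  (forall t, cube t -> f (rep (phi (t 0 ord0) 0) t) = F t) ->
  (forall t, cube t -> f (rep (phi (t 0 ord0) 1) t) = G t) ->
  hmt X x0 F G.
Proof.
move=> c r e bf e0 e1; exact: (hext e0 e1 (hreparam c r e bf)).
Qed.

Lemma runit f : based_map X x0 f -> hmt X x0 (concat f (fun _ => x0)) f.
Proof.
move=> bf.
apply: (@hrep_ext (fun u s => (1 - s) * Num.min 1 (2 * u) + s * u) f) => //.
- by contac.
- move=> u s /andP[u0 u1] /andP[s0 s1].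
  case: (minR 1 (2 * u)) => -[hm ->]; apply/andP; split; nra.
- move=> s hs; rewrite !mulr0 !mulr1 addr0.
  case: (minR 1 0) => -[hm ->]; case: (minR 1 2) => -[hm2 ->];
    (split; [left|right]); lra.
- move=> t ht /=; rewrite concatE subr0 mul1r mul0r addr0.
  have /andP[t0 t1] := c01 ht.
  case: ifPn => hh.
    case: (minR 1 (2 * t 0 ord0)) => -[hm ->] //.
    by congr f; apply: rep_eq; lra.
  by case: (minR 1 (2 * t 0 ord0)) => -[hm ->];
    [apply: (bdry_map bf); apply: bdry_rep01 => //; right|exfalso; lra].
- by move=> t ht /=; rewrite subrr mul0r add0r mul1r rep_id.
Qed.

Lemma rinv f : based_map X x0 f -> hmt X x0 (concat f (Defs.rev f)) (fun _ => x0).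
Proof.
move=> bf.
apply: (@hrep_ext (fun u s => (1 - s) * Num.min (2 * u) (2 - 2 * u)) f) => //.
- by contac.
- move=> u s /andP[u0 u1] /andP[s0 s1].
  case: (minR (2 * u) (2 - 2 * u)) => -[hm ->]; apply/andP; split; nra.
- move=> s hs; rewrite !mulr0 !mulr1 subr0 subrr.
  case: (minR 0 2) => -[hm ->]; case: (minR 2 0) => -[hm2 ->];
    (split; left); lra.
- move=> t ht /=; rewrite concatE subr0 mul1r revE rep0 rep_rep.
  have /andP[t0 t1] := c01 ht.
  case: ifPn => hh;
  case: (minR (2 * t 0 ord0) (2 - 2 * t 0 ord0)) => -[hm ->];
    try (by exfalso; lra); by congr f; apply: rep_eq; lra.
- move=> t ht /=; rewrite subrr mul0r; apply: (bdry_map bf); apply: bdry_rep01 => //.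
  by left.
Qed.

Lemma rev_rev f : Defs.rev (Defs.rev f) = f.
Proof.
apply: funext => t; rewrite !revE rep0 rep_rep.
by rewrite opprB addrC subrK rep_id.
Qed.

Lemma linv f : based_map X x0 f -> hmt X x0 (concat (Defs.rev f) f) (fun _ => x0).
Proof.
move=> bf; have := rinv (based_rev bf); by rewrite rev_rev.
Qed.

Lemma minE3 (a b c m : R) : (m = a \/ m = b \/ m = c) -> m <= a -> m <= b -> m <= c ->
  Num.min a (Num.min b c) = m.
Proof.
move=> hm ha hb hc.
case: (minR b c) => -[h1 ->].
  by case: (minR a b) => -[h2 ->]; lra.
by case: (minR a c) => -[h2 ->]; lra.
Qed.

Definition psi (u : R) := Num.min (2 * u) (Num.min (u + 4^-1) (2^-1 * u + 2^-1)).

Lemma psi1 u : 0 <= u -> u <= 4^-1 -> psi u = 2 * u.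
Proof.
move=> h1 h2; rewrite /psi.
apply: minE3; lra.
Qed.
Lemma psi2 u : 4^-1 <= u -> u <= 2^-1 -> psi u = u + 4^-1.
Proof.
move=> h1 h2; rewrite /psi.
apply: minE3; lra.
Qed.
Lemma psi3 u : 2^-1 <= u -> psi u = 2^-1 * u + 2^-1.
Proof.
move=> h1; rewrite /psi.
apply: minE3; lra.
Qed.

Lemma psi_range u : 0 <= u <= 1 -> 0 <= psi u <= 1.
Proof.
move=> /andP[h1 h2].
case: (lerP u 4^-1) => a; first by rewrite psi1 //; apply/andP; split; lra.
case: (lerP u 2^-1) => b; first by rewrite psi2 //; [apply/andP; split; lra|lra].
by rewrite psi3; [apply/andP; split; lra|lra].
Qed.

Lemma assoc f g h : based_map X x0 f -> based_map X x0 g -> based_map X x0 h ->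
  hmt X x0 (concat f (concat g h)) (concat (concat f g) h).
Proof.
move=> bf bg bh.
have bM := based_concat bf (based_concat bg bh).
apply: (@hrep_ext (fun u s => (1 - s) * u + s * psi u) (concat f (concat g h))) => //.
- by rewrite /psi; contac.
- move=> u s hu /andP[s0 s1]; have /andP[p0 p1] := psi_range hu.
  move/andP: hu => [u0 u1]; apply/andP; split; nra.
- move=> s hs; rewrite /psi !mulr0 !mulr1 !add0r.
  case: (minR (4^-1) (2^-1)) => -[hm ->]; try (exfalso; lra).
  case: (minR 0 (4^-1)) => -[hm2 ->]; try (exfalso; lra).
  case: (minR (1 + 4^-1) (2^-1 + 2^-1)) => -[hm3 ->]; try (exfalso; lra).
  case: (minR 2 (2^-1 + 2^-1)) => -[hm4 ->]; try (exfalso; lra).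
  split; [left|right]; lra.
- by move=> t ht /=; rewrite subr0 mul1r mul0r addr0 rep_id.
move=> t ht /=; rewrite subrr mul0r add0r mul1r.
have /andP[t0 t1] := c01 ht.
rewrite !concatE !rep0 !rep_rep.
case: (lerP (t 0 ord0) 4^-1) => a.
  rewrite psi1 //.
  have -> : (2 * t 0 ord0 <= 2^-1) = true by apply/idP; lra.
  have -> : (t 0 ord0 <= 2^-1) = true by apply/idP; lra.
  by [].
case: (lerP (t 0 ord0) 2^-1) => b.
  rewrite psi2 //; last lra.
  have -> : (t 0 ord0 + 4^-1 <= 2^-1) = false by apply/negbTE; lra.
  have -> : (2 * (t 0 ord0 + 4^-1) - 1 <= 2^-1) = true by apply/idP; lra.
  have -> : (2 * t 0 ord0 <= 2^-1) = false by apply/negbTE; lra.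
  by congr g; apply: rep_eq; lra.
rewrite psi3 //; last lra.
have -> : (2^-1 * t 0 ord0 + 2^-1 <= 2^-1) = false by apply/negbTE; lra.
have -> : (2 * (2^-1 * t 0 ord0 + 2^-1) - 1 <= 2^-1) = false by apply/negbTE; lra.
by congr h; apply: rep_eq; lra.
Qed.

End Laws.

Section Wedge.
Variable R : realType.
Variable m : nat.
Local Notation W := (wpt R m).
Local Notation S := (@sphere R m).
Local Notation s0 := (s0 R m).
Implicit Types (x : 'rV[R]_m.+1).

Lemma sphere_s0 : S s0.
Proof.
rewrite /sphere /= big_ord_recl !mxE eqxx expr1n big1 ?addr0 // => i _.
by rewrite !mxE /= expr0n.
Qed.

Lemma relopen_const N (D : set 'rV[R]_N) (P : Prop) : relopen D [set _ | P].
Proof.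
have [hP|hP] := pselect P.
  by exists setT; split; [exact: openT|apply/seteqP; split => y []].
by exists set0; split; [exact: open0|apply/seteqP; split => y [] //].
Qed.

Lemma relopen_ext N (D A B : set 'rV[R]_N) : (forall y, A y <-> B y) ->
  relopen D A -> relopen D B.
Proof.
move=> e [V [oV hV]]; exists V; split => //; rewrite hV.
by apply/seteqP; split => y [Hy Dy]; split => //; apply/e.
Qed.

Definition q (i : nat) (p : W) : W :=
  match p with Some (j, x) => if j == i then p else None | None => None end.
Definition pr (i : nat) (p : W) : 'rV[R]_m.+1 :=
  match p with Some (j, x) => if j == i then x else s0 | None => s0 end.

Lemma collapse_inW k j x : collapse k (inW j x) = if (j <= k)%N then inW j x else None.
Proof. by rewrite /inW; case: eqP => //= _; case: ifP. Qed.
Lemma q_inW i j x : q i (inW j x) = if j == i then inW j x else None.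
Proof. by rewrite /inW; case: eqP => //= _; case: ifP. Qed.
Lemma pr_inW i j x : pr i (inW j x) = if j == i then x else s0.
Proof. by rewrite /inW; case: eqP => [->|] /=; case: ifP. Qed.

Lemma inW_carrier (P : nat -> Prop) j x : P j -> S x -> in_sphere_j P (inW j x).
Proof. by rewrite /inW; case: eqP => //= /eqP. Qed.

Lemma sp_collapse k K : (k <= K)%N -> spmap (Xle R m K) (Xle R m k) (collapse k).
Proof.
move=> kK; split.
  case=> [[j x]|] //= [hj hx]; case: ifP => //= jk; split => //.
  by case/andP: hj => ->.
move=> U /= hU j /andP[j0 jK].
have [jk|jk] := leqP j k.
  apply: relopen_ext (hU j _) => [x|]; last by rewrite j0 jk.
  by rewrite /= collapse_inW jk.
apply: relopen_ext (relopen_const _ (U None)) => x.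
by rewrite /= collapse_inW leqNgt jk.
Qed.

Lemma sp_q i k : spmap (Xle R m k) (Xle R m k) (q i).
Proof.
split; first by case=> [[j x]|] //=; case: ifP.
move=> U /= hU j hj.
have [ji|ji] := eqVneq j i.
  by apply: relopen_ext (hU j hj) => x; rewrite /= q_inW ji eqxx.
by apply: relopen_ext (relopen_const _ (U None)) => x; rewrite /= q_inW (negbTE ji).
Qed.

Lemma sp_pr i : (0 < i)%N -> spmap (Xle R m i) (Sspace R m) (pr i).
Proof.
move=> i0; split.
  case=> [[j x]|] /=; last by move=> _; exact: sphere_s0.
  by move=> [_ [hx _]]; case: ifP => // _; exact: sphere_s0.
move=> U /= hU j /andP[j0 ji].
have [e|e] := eqVneq j i.
  by apply: relopen_ext hU => x; rewrite /= pr_inW e eqxx.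
by apply: relopen_ext (relopen_const _ (U s0)) => x; rewrite /= pr_inW (negbTE e).
Qed.

Lemma sp_inW i k : (0 < i <= k)%N -> spmap (Sspace R m) (Xle R m k) (inW i).
Proof.
move=> hi; split; first by move=> x hx; apply: inW_carrier.
by move=> U /= hU; apply: hU.
Qed.

Lemma sp_collapseE k : spmap (Espace R m) (Xle R m k) (collapse k).
Proof.
split.
  case=> [[j x]|] //= [hj hx]; case: ifP => //= jk; split => //.
  by rewrite hj jk.
move=> U /= hU; split.
  move=> j j0; have [jk|jk] := leqP j k.
    apply: relopen_ext (hU j _) => [x|]; last by rewrite j0 jk.
    by rewrite /= collapse_inW jk.
  apply: relopen_ext (relopen_const _ (U None)) => x.
  by rewrite /= collapse_inW leqNgt jk.
move=> hN; exists k.+1 => j jk j0 x hx /=.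
by rewrite collapse_inW leqNgt jk.
Qed.

Lemma sp_XE k : spmap (Xle R m k) (Espace R m) id.
Proof.
split; first by case=> [[j x]|] //= [/andP[-> _] hx].
move=> U /= [hU _] j /andP[j0 _]; exact: hU.
Qed.

End Wedge.

Section Sums.
Variable R : realType.
Variables m n : nat.
Local Notation W := (wpt R m).
Local Notation S := (@sphere R m).
Local Notation s0 := (s0 R m).
Implicit Types (t v : 'rV[R]_n.+1).

Variable alpha : nat -> 'rV[R]_n.+1 -> 'rV[R]_m.+1.
Hypothesis halpha : forall i, (0 < i)%N -> based_map (Sspace R m) s0 (alpha i).

Definition V (s len : nat) : 'rV[R]_n.+1 -> W :=
  foldr (fun i acc => concat (inW i \o alpha i) acc) (fun _ => None) (iota s len).

Lemma wsumV k : wsum alpha k = V 1 k. Proof. by []. Qed.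
Lemma V0 s : V s 0 = (fun _ => None). Proof. by []. Qed.
Lemma VS s len : V s len.+1 = concat (inW s \o alpha s) (V s.+1 len). Proof. by []. Qed.

Lemma inW_s0 i : inW i s0 = None :> W.
Proof. by rewrite /inW eqxx. Qed.

Lemma based_term i k : (0 < i <= k)%N -> based_map (Xle R m k) None (inW i \o alpha i).
Proof.
move=> hi; have sp := @sp_inW R m i k hi.
have := based_comp sp (inW_s0 i) (halpha (i := i) _); apply.
by case/andP: hi.
Qed.

Lemma based_none k : based_map (Xle R m k) None (fun _ : 'rV[R]_n.+1 => None).
Proof. exact: based_const. Qed.

Lemma V_based k s len : (0 < s)%N -> (s + len <= k.+1)%N -> based_map (Xle R m k) None (V s len).
Proof.
elim: len s => [|len IH] s s0' hs; first exact: based_none.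
rewrite VS; apply: based_concat.
  by apply: based_term; rewrite s0' /=; move: hs; rewrite addnS ltnS => /(leq_trans _); apply; rewrite leq_addr.
by apply: IH => //; rewrite addSnnS.
Qed.

Lemma comp_concat T T' (phi : T -> T') (A B : 'rV[R]_n.+1 -> T) :
  phi \o concat A B = concat (phi \o A) (phi \o B).
Proof. by apply: funext => t /=; rewrite /concat; case: ifP. Qed.

Lemma comp_rev T T' (phi : T -> T') (A : 'rV[R]_n.+1 -> T) :
  phi \o Defs.rev A = Defs.rev (phi \o A).
Proof. by []. Qed.

Lemma concat_none : concat (fun _ : 'rV[R]_n.+1 => None : W) (fun _ => None) = (fun _ => None).
Proof. by apply: funext => t; rewrite /concat; case: ifP. Qed.

Lemma collapse_term k i : collapse k \o (inW i \o alpha i) = if (i <= k)%N then inW i \o alpha i else (fun _ => None).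
Proof. by apply: funext => t /=; rewrite collapse_inW; case: ifP. Qed.

Lemma collapse_V_low k s len : (s + len <= k.+1)%N -> collapse k \o V s len = V s len.
Proof.
elim: len s => [|len IH] s hs; first by [].
rewrite VS comp_concat collapse_term IH; last by rewrite addSnnS.
by rewrite ifT //; move: hs; rewrite addnS ltnS => /(leq_trans _); apply; rewrite leq_addr.
Qed.

Lemma collapse_V_top k s len : (s + len = k.+1)%N -> collapse k \o V s len.+1 = V s len.
Proof.
elim: len s => [|len IH] s hs.
  rewrite VS comp_concat collapse_term ifF; last by rewrite addn0 in hs; rewrite hs ltnn.
  by rewrite V0 concat_none.
rewrite VS comp_concat collapse_term IH; last by rewrite addSnnS.
by rewrite ifT // -ltnS -hs addnS ltnS leq_addr.
Qed.

Lemma collapse_wsum k : collapse k \o wsum alpha k.+1 = wsum alpha k.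
Proof. by rewrite !wsumV collapse_V_top // add1n. Qed.

Lemma collapse_collapse k K : (k <= K)%N -> collapse k \o collapse K = collapse k :> (W -> W).
Proof.
move=> kK; apply: funext => -[[j x]|] //=.
case: ifP => jK /=; first by [].
by rewrite ifF //; apply/negbTE; rewrite -ltnNge; apply: (leq_ltn_trans kK); rewrite ltnNge jK.
Qed.

Lemma collapse_wsum_ge k K : (k <= K)%N -> collapse k \o wsum alpha K = wsum alpha k.
Proof.
elim: K => [|K IH]; first by rewrite leqn0 => /eqP ->; apply: funext => t.
rewrite leq_eqVlt => /orP[/eqP <-|]; first by rewrite collapse_V_low // add1n.
rewrite ltnS => kK.
by rewrite -(collapse_collapse kK) -compA collapse_wsum IH.
Qed.

Lemma wsum_thread : is_thread (fun k => wsum alpha k).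
Proof.
split => k; first by apply: V_based.
rewrite collapse_wsum; apply: hrefl; exact: V_based.
Qed.


Lemma alpha_bdry i w : (0 < i)%N -> bdry w -> alpha i w = s0.
Proof. by move=> i0 hw; have [_ ->] := halpha i0. Qed.
Lemma alpha_sphere i w : (0 < i)%N -> cube w -> S (alpha i w).
Proof. by move=> i0 hw; have [[h _] _] := halpha i0; apply: h. Qed.

Lemma V_stab M : forall s len len' v, (0 < s)%N -> cube v ->
  1 <= 2 ^+ M * (1 - v 0 ord0) -> (M <= len <= len')%N -> V s len v = V s len' v.
Proof.
elim: M => [|M IH] s len len' v s0' hv hM /andP[h1 h2].
  rewrite expr0 mul1r in hM; have /andP[a b] := hv ord0.
  have e : v 0 ord0 = 0 by lra.
  case: len h1 h2 => [|l] _ h2; case: len' h2 => [|l'] h2 //.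
    rewrite V0 VS concatE e; have -> : (0 : R) <= 2^-1 by lra.
    rewrite /= mulr0 alpha_bdry // ?inW_s0 //; apply: bdry_rep01 => //; by left.
  rewrite !VS !concatE; have -> : v 0 ord0 <= 2^-1 by lra.
  by [].
case: len h1 h2 => [|l] // h1 h2; case: len' h2 => [|l'] // h2.
rewrite !VS !concatE; case: ifPn => h //.
have h' : 2^-1 <= v 0 ord0 by rewrite ltW // ltNge.
apply: IH => //; first exact: cube_rep_r.
  rewrite rep0; rewrite exprS in hM; nra.
lia.
Qed.

Lemma V_one : forall len s v, cube v -> v 0 ord0 = 1 -> V s len v = None.
Proof.
elim=> [|len IH] s v hv e //.
rewrite VS concatE e; have -> : ((1 : R) <= 2^-1) = false by apply/negbTE; lra.
apply: IH; first by apply: cube_rep => //; apply/andP; split; lra.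
by rewrite rep0; lra.
Qed.

Lemma V_form : forall len s v, (0 < s)%N -> cube v ->
  V s len v = None \/ exists j y, (s <= j)%N /\ S y /\ V s len v = inW j y.
Proof.
elim=> [|len IH] s v s0' hv; first by left.
rewrite VS concatE; case: ifPn => h.
  right; exists s, (alpha s (rep (2 * v 0 ord0) v)); split => //; split => //.
  by apply: alpha_sphere => //; apply: cube_rep_l.
have h' : 2^-1 <= v 0 ord0 by rewrite ltW // ltNge.
case: (IH s.+1 (rep (2 * v 0 ord0 - 1) v)) => //; first exact: cube_rep_r.
  by left.
move=> [j [y [hj [hy e]]]]; right; exists j, y; split; last by [].
exact: ltnW.
Qed.

Lemma V_bound M : forall s len v, (0 < s)%N -> cube v ->
  2 ^+ M * (1 - v 0 ord0) < 1 ->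
  V s len v = None \/ exists j y, (s + M <= j)%N /\ S y /\ V s len v = inW j y.
Proof.
elim: M => [|M IH] s len v s0' hv hM; first by rewrite addn0; apply: V_form.
case: len => [|l]; first by left.
have P1 : 1 <= (2 : R) ^+ M by apply: exprn_ege1; lra.
have /andP[a b] := hv ord0.
rewrite exprS in hM.
have h' : 2^-1 < v 0 ord0 by nra.
rewrite VS concatE; have -> : (v 0 ord0 <= 2^-1) = false by apply/negbTE; lra.
case: (IH s.+1 l (rep (2 * v 0 ord0 - 1) v)) => //.
- by apply: cube_rep_r => //; lra.
- by rewrite rep0; nra.
- by left.
move=> [j [y [hj [hy e]]]]; right; exists j, y; split; last by [].
by rewrite addnS -addSn.
Qed.

Lemma ex_pow (x : R) : 0 < x -> exists M : nat, 1 <= 2 ^+ M * x.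
Proof.
move=> x0; have hx : 0 <= x^-1 by rewrite invr_ge0 ltW.
have hb := archi_boundP hx.
set M := Num.Def.archi_bound _ in hb; exists M.
have h2 : (M%:R : R) <= 2 ^+ M.
  rewrite -natrX ler_nat; apply: ltnW; exact: ltn_expl.
have e : x^-1 * x = 1 by rewrite mulVf // gt_eqF.
nra.
Qed.

Definition Nf v : nat :=
  match pselect (exists M : nat, 1 <= 2 ^+ M * (1 - v 0 ord0)) with
  | left e => xchoose e
  | right _ => 0%N
  end.

Lemma Nf_spec v : v 0 ord0 < 1 -> 1 <= 2 ^+ (Nf v) * (1 - v 0 ord0).
Proof.
move=> h; rewrite /Nf; case: pselect => [e|ne]; first exact: (xchooseP e).
by exfalso; apply: ne; apply: ex_pow; lra.
Qed.

Definition finf v : W := wsum alpha (Nf v) v.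

Lemma finfE v K : cube v -> (Nf v <= K)%N -> finf v = wsum alpha K v.
Proof.
move=> hv hK; rewrite /finf !wsumV.
have /andP[a b] := hv ord0.
have [lt1|ge1] := ltrP (v 0 ord0) 1.
  apply: (V_stab (M := Nf v)) => //; first exact: Nf_spec.
  by rewrite leqnn.
have e : v 0 ord0 = 1 by lra.
by rewrite !V_one.
Qed.

Lemma collapse_finf k v : cube v -> collapse k (finf v) = wsum alpha k v.
Proof.
move=> hv; rewrite (finfE (K := maxn k (Nf v))) //; last exact: leq_maxr.
by rewrite -(collapse_wsum_ge (leq_maxl k (Nf v))).
Qed.


Lemma open_gtf N (g : 'rV[R]_N -> R) c : continuous g -> open [set v | c < g v].
Proof. by move=> cg; have := (continuousP g).1 cg _ (@open_gt R c); apply. Qed.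
Lemma open_ltf N (g : 'rV[R]_N -> R) c : continuous g -> open [set v | g v < c].
Proof. by move=> cg; have := (continuousP g).1 cg _ (@open_lt R c); apply. Qed.

Lemma cont_powf M : continuous (fun v : 'rV[R]_n.+1 => 2 ^+ M * (1 - v 0 ord0)).
Proof.
apply: cont_mul; first exact: cont_cst.
by apply: cont_add; [exact: cont_cst|apply: cont_opp; exact: (@cont_c0 R n)].
Qed.

Lemma finf_bdry t : bdry t -> finf t = None.
Proof.
move=> ht; rewrite /finf wsumV.
have := @V_based (Nf t) 1 (Nf t) isT (leqnn _); case=> _; apply; exact: ht.
Qed.

Lemma finf_based : based_map (Espace R m) None finf.
Proof.
split; last exact: finf_bdry.
split.
  move=> t ht; have [[c _] _] := @V_based (Nf t) 1 (Nf t) isT (leqnn _).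
  by have [h _] := @sp_XE R m (Nf t); apply: h; apply: c.
move=> U oU; apply: relopen_local => x hx hU.
have /andP[a b] := hx ord0.
have [lt1|ge1] := ltrP (x 0 ord0) 1.
  set M := (Nf x).+1.
  have hM : 1 < 2 ^+ M * (1 - x 0 ord0).
    have := Nf_spec lt1; rewrite /M exprS; lra.
  have bw := @V_based M 1 M isT (leqnn _).
  have cw := cont_spmap (@sp_XE R m M) bw.1.
  have hU' : U (wsum alpha M x) by rewrite -(finfE hx) // /M.
  have [V' [oV' [xV' hV']]] := relopen_elim (cw.2 U oU) hx hU'.
  exists (V' `&` [set v | 1 < 2 ^+ M * (1 - v 0 ord0)]); split.
    by apply: openI => //; apply: open_gtf; exact: cont_powf.
  split => // y [yV yM] hy.
  rewrite /= (finfE (K := maxn M (Nf y))) //; last exact: leq_maxr.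
  rewrite wsumV -(@V_stab M 1 M) //; first exact: hV'.
    exact: ltW.
  by rewrite leqnn leq_maxl.
have e : x 0 ord0 = 1 by lra.
have hN : U None by move: hU; rewrite /= /finf wsumV V_one.
have [_ hE] := oU; have [N0 hN0] := hE hN.
exists [set v : 'rV[R]_n.+1 | 2 ^+ N0 * (1 - v 0 ord0) < 1]; split.
  by apply: open_ltf; exact: cont_powf.
split; first by rewrite /= e subrr mulr0 ltr01.
move=> y hy cy; rewrite /= /finf wsumV.
case: (@V_bound N0 1 (Nf y) y isT cy hy) => [->|[j [z [hj [hz ->]]]]] //.
apply: hN0 => //.
  by apply: leq_trans hj; rewrite leq_addl.
by apply: leq_trans hj; rewrite add1n.
Qed.


Lemma q_term i j : q i \o (inW j \o alpha j) = if j == i then inW j \o alpha j else (fun _ => None).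
Proof. by apply: funext => t /=; rewrite q_inW; case: ifP. Qed.

Lemma Q0 i s len : (i < s)%N \/ (s + len <= i)%N -> q i \o V s len = (fun _ => None).
Proof.
elim: len s => [|len IH] s hi; first by [].
rewrite VS comp_concat q_term ifF; last first.
  by apply/negbTE/eqP => e; subst; case: hi; rewrite ?ltnn // addnS ltnNge leq_addr.
rewrite IH ?concat_none //; case: hi => h; [left; exact: ltnW|right; by rewrite addSnnS].
Qed.

Lemma Q1 k i : forall len s, (0 < s)%N -> (s <= i < s + len)%N -> (s + len <= k.+1)%N ->
  hmt (Xle R m k) None (q i \o V s len) (inW i \o alpha i).
Proof.
elim=> [|len IH] s s0' hi hk; first by rewrite addn0 in hi; case/andP: hi => a b; exfalso; lia.
rewrite VS comp_concat q_term.
have ik : (0 < i <= k)%N by lia.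
case: eqP => [e|ne].
  subst s; rewrite Q0; last by left.
  by apply: runit; apply: based_term.
apply: htrans (lunit _) _.
  by apply: based_comp (@sp_q R m i k) _ (V_based _ _) => //; lia.
apply: IH => //; lia.
Qed.

Lemma Zsum k : forall len s, (0 < s)%N -> (s + len <= k.+1)%N ->
  (forall i, (s <= i < s + len)%N -> hmt (Xle R m k) None (inW i \o alpha i) (fun _ => None)) ->
  hmt (Xle R m k) None (V s len) (fun _ => None).
Proof.
elim=> [|len IH] s s0' hk h; first by apply: hrefl; exact: based_none.
rewrite VS -concat_none; apply: hconcat.
  by apply: h; lia.
by apply: IH => // [|i hi]; [lia|apply: h; lia].
Qed.

End Sums.

Section Cech.
Variable R : realType.
Variables m n : nat.
Local Notation W := (wpt R m).
Local Notation Th := (thread R m n.+1).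
Implicit Types (F G : Th).

Lemma sp_comp T1 T2 T3 (X : Defs.space T1) (Y : Defs.space T2) (Z : Defs.space T3) phi psi :
  spmap X Y phi -> spmap Y Z psi -> spmap X Z (psi \o phi).
Proof.
move=> [a b] [c d]; split => [x /a /c //|U /d /b //].
Qed.

Lemma sp_up k K : (k <= K)%N -> spmap (Xle R m k) (Xle R m K) id.
Proof.
move=> kK; split; first by case=> [[j x]|] //= [/andP[j0 jk] hx]; split => //; rewrite j0 /=; lia.
by move=> U /= hU j /andP[j0 jk]; apply: hU; lia.
Qed.

Lemma part1 F : in_W1 F -> in_imPsi F.
Proof.
case=> thF [al [hal hF]]; split => //.
exists (finf al); split; first exact: finf_based.
move=> k; have h : hmt (Xle R m k) None (F k) (wsum al k) := hF k.
apply: (hext _ _ h) => t ht //.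
by rewrite /= collapse_finf.
Qed.

Lemma thread_add F G : is_thread F -> is_thread G -> is_thread (cech_add F G).
Proof.
case=> bF tF [bG tG]; split => k; first by apply: based_concat.
rewrite /cech_add (comp_concat (collapse k) (F k.+1) (G k.+1)). exact: (hconcat (tF k) (tG k)).
Qed.

Lemma thread_opp F : is_thread F -> is_thread (cech_opp F).
Proof.
case=> bF tF; split => k; first by apply: based_rev.
rewrite /cech_opp (comp_rev (collapse k) (F k.+1)); exact: (hrev (tF k)).
Qed.

Lemma thread_zero : is_thread (@cech_zero R m n.+1).
Proof. by split => k; [exact: based_none|apply: hrefl; exact: based_none]. Qed.

Lemma imPsi_zero : in_imPsi (@cech_zero R m n.+1).
Proof.
split; first exact: thread_zero.
exists (fun _ => None); split; first exact: based_const.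
by move=> k; apply: hrefl; exact: based_none.
Qed.

Lemma imPsi_add F G : in_imPsi F -> in_imPsi G -> in_imPsi (cech_add F G).
Proof.
case=> tF [f [bf hf]] [tG [g [bg hg]]]; split; first exact: thread_add.
exists (concat f g); split; first exact: based_concat.
by move=> k; rewrite /cech_add (comp_concat (collapse k) f g); exact: (hconcat (hf k) (hg k)).
Qed.

Lemma imPsi_opp F : in_imPsi F -> in_imPsi (cech_opp F).
Proof.
case=> tF [f [bf hf]]; split; first exact: thread_opp.
exists (Defs.rev f); split; first exact: based_rev.
by move=> k; rewrite /cech_opp (comp_rev (collapse k) f); exact: (hrev (hf k)).
Qed.

Lemma imPsi_eq F G : in_imPsi F -> is_thread G -> cech_eq F G -> in_imPsi G.
Proof.
case=> tF [f [bf hf]] tG e; split => //; exists f; split => // k.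
exact: htrans (hsym (e k)) (hf k).
Qed.

Definition Cset (F : Th) : Prop := in_imPsi F /\
  forall k i, (0 < i <= k)%N -> hmt (Xle R m k) None (q i \o F k) (fun _ => None).

Lemma q_none k i : based_map (Xle R m k) None (q i \o (fun _ : 'rV[R]_n.+1 => None)).
Proof. exact: based_none. Qed.

Lemma q_collapse i k : (i <= k)%N -> q i \o collapse k = q i :> (W -> W).
Proof.
move=> ik; apply: funext => -[[j x]|] //=.
case: ifP => jk //=; case: eqP => // e; subst j; by rewrite ik in jk.
Qed.

Lemma thread_q F i : is_thread F -> forall k, (0 < i <= k)%N ->
  hmt (Xle R m k) None (q i \o F i) (q i \o F k).
Proof.
case=> bF tF; elim=> [|k IH] hk; first by exfalso; lia.
have [e|ne] := eqVneq i k.+1.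
  subst i; apply: hrefl; apply: based_comp (@sp_q R m k.+1 k.+1) _ (bF _) => //.
have hk' : (0 < i <= k)%N by lia.
have up := @sp_up k k.+1 (leqnSn k).
apply: htrans.
  by have := hcomp up erefl (IH hk'); apply.
have H := hcomp (sp_comp (@sp_q R m i k) up) erefl (tF k).
have ik : (i <= k)%N by lia.
have e : forall p : W, q i (collapse k p) = q i p.
  by move=> p; have := congr1 (fun h => h p) (q_collapse ik).
apply: hsym; apply: (hext _ _ H) => t _ //=.
Qed.

Lemma q_pr_eq F i t : (0 < i)%N -> is_thread F -> cube t ->
  (inW i \o (pr i \o F i)) t = (q i \o F i) t.
Proof.
move=> i0 [bF _] ht /=.
have [[c _] _] := bF i; have := c t ht.
case: (F i t) => [[j x]|] /=.
  move=> [_ [hx hx0]]; case: eqP => [->|] //.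
    by rewrite /inW (negbTE hx0).
  by move=> _; rewrite inW_s0.
by move=> _; rewrite inW_s0.
Qed.


Lemma based_qF F i k : is_thread F -> based_map (Xle R m k) None (q i \o F k).
Proof. by case=> bF _; apply: based_comp (@sp_q R m i k) _ (bF k). Qed.

Lemma C_eq F G : Cset F -> is_thread G -> cech_eq F G -> Cset G.
Proof.
case=> iF hF tG e; split; first exact: imPsi_eq iF tG e.
move=> k i hik; apply: htrans (hF k i hik).
have h0 : hmt (Xle R m k) None (F k) (G k) := e k.
exact: hsym (hcomp (@sp_q R m i k) erefl h0).
Qed.

Lemma C_zero : Cset (@cech_zero R m n.+1).
Proof.
split; first exact: imPsi_zero.
by move=> k i _; apply: hrefl; exact: based_none.
Qed.

Lemma C_add F G : Cset F -> Cset G -> Cset (cech_add F G).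
Proof.
case=> iF hF [iG hG]; split; first exact: imPsi_add.
move=> k i hik; rewrite /cech_add (comp_concat (q i) (F k) (G k)) -concat_none.
exact: hconcat (hF k i hik) (hG k i hik).
Qed.

Lemma C_opp F : Cset F -> Cset (cech_opp F).
Proof.
case=> iF hF; split; first exact: imPsi_opp.
move=> k i hik; rewrite /cech_opp (comp_rev (q i) (F k)).
exact: (hrev (hF k i hik)).
Qed.

Lemma W1_C_zero F : in_W1 F -> Cset F -> cech_eq F (@cech_zero R m n.+1).
Proof.
case=> tF [al [hal hF]] [_ hC] k.
have h1 : forall i, (1 <= i < 1 + k)%N ->
    hmt (Xle R m k) None (inW i \o al i) (fun _ => None).
  move=> i hi; have hik : (0 < i <= k)%N by lia.
  apply: htrans (hC k i hik).
  have hk1 : (1 + k <= k.+1)%N by lia.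
  apply: htrans (hsym (@Q1 R m n al hal k i k 1 isT hi hk1)) _.
  have h0 : hmt (Xle R m k) None (F k) (wsum al k) := hF k.
  exact: hsym (hcomp (@sp_q R m i k) erefl h0).
have h0 : hmt (Xle R m k) None (F k) (wsum al k) := hF k.
apply/homE; apply: htrans h0 _.
by rewrite wsumV; apply: Zsum => //; lia.
Qed.

Lemma decomp F : in_imPsi F -> exists W D, in_W1 W /\ Cset D /\ cech_eq F (cech_add W D).
Proof.
move=> iF; have tF := iF.1; have [bF _] := tF.
pose be := fun i => pr i \o F i.
have hbe : forall i, (0 < i)%N -> based_map (Sspace R m) (s0 R m) (be i).
  by move=> i i0; apply: based_comp (@sp_pr R m i i0) _ (bF i).
pose Wt : Th := fun k => wsum be k.
have tW : is_thread Wt by apply: wsum_thread.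
have W1W : in_W1 Wt.
  split => //; exists be; split => // k; apply: hrefl; exact: (tW.1 k).
exists Wt, (cech_add (cech_opp Wt) F); split => //; split.
  split; first by apply: imPsi_add => //; apply: imPsi_opp; apply: part1.
  move=> k i hik.
  rewrite /cech_add /cech_opp (comp_concat (q i) (Defs.rev (Wt k)) (F k)).
  rewrite (comp_rev (q i) (Wt k)).
  have bqF := based_qF i k tF.
  apply: htrans (linv bqF).
  apply: hconcat; last exact: hrefl.
  apply: hrev.
  have i0 : (0 < i)%N by lia.
  have hT := thread_q tF hik.
  have hT2 := hT.
  apply: htrans hT2.
  rewrite /Wt wsumV.
  have hi1 : (1 <= i < 1 + k)%N by lia.
  have hk1 : (1 + k <= k.+1)%N by lia.
  apply: htrans (@Q1 R m n be hbe k i k 1 isT hi1 hk1) _.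
  apply: (hext _ _ (hrefl (hbased_l hT))) => t ht //.
  by symmetry; exact: (q_pr_eq i0 tF ht).
move=> k; apply/homE.
have bW := tW.1 k.
have bWr := based_rev bW.
apply: hsym.
apply: htrans (assoc bW bWr (bF k)) _.
apply: htrans (lunit (bF k)).
apply: hconcat; last exact: hrefl.
exact: rinv.
Qed.

End Cech.

Theorem mainTheorem10 (R : realType) (m n : nat) (hm : (2 <= m)%N) (hn : (2 <= n)%N) :
  (forall F : thread R m n, in_W1 F -> in_imPsi F) /\
  direct_summand_in (@in_W1 R m n) (@in_imPsi R m n).
Proof.
case: n hn => [//|n] _.
split; first exact: part1.
exists (@Cset R m n); split; first exact: C_eq.
split; first exact: C_zero.
split; first exact: C_add.
split; first exact: C_opp.
split; first by move=> F [].
split; first exact: decomp.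
exact: W1_C_zero.
Qed.
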